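(* The function $h$ is well defined (distinct sequences $(\alpha_n)$ with $\alpha_n\in\Theta$ give distinct points of $D(h)$, each point of $D(h)$ having a unique nega-$q$-ary representation), $h$ is a bijection from $D(h)$ onto $E(h)=\{\Delta^{-q}_{\alpha_1\alpha_2\ldots}:\alpha_n\in\Theta\}$, and $h$ is continuous at every point of $D(h)$.
   Context: Let $q>3$ be an integer, fix $u\in\{0,1,\ldots,q-1\}$, and put $\Theta=\{1,2,\ldots,q-1\}\setminus\{u\}$. The nega-$q$-ary representation is $\Delta^{-q}_{\beta_1\beta_2\ldots}=\sum_{k\ge1}\frac{\beta_k}{(-q)^k}$, $\beta_k\in\{0,\ldots,q-1\}$. For a sequence $(\alpha_n)_{n\ge1}$ with $\alpha_n\in\Theta$, let $x((\alpha_n))$ be the number whose nega-$q$-ary digit string is the concatenation of the blocks $\underbrace{u\ldots u}_{\alpha_n-1}\alpha_n$ ($\alpha_n-1$ copies of $u$ followed by the digit $\alpha_n$), $n=1,2,\ldots$; equivalently $x=-\frac{u}{q+1}+\sum_{n\ge1}\frac{\alpha_n-u}{(-q)^{\alpha_1+\cdots+\alpha_n}}$. Let $D(h)$ be the set of all such $x$, and define $h:D(h)\to\mathbb R$ by $h(x)=\Delta^{-q}_{\alpha_1\alpha_2\ldots}=\sum_{n\ge1}\frac{\alpha_n}{(-q)^n}$. *)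

(* Defs.v *)
From Stdlib Require Import Reals Lra Lia List Classical ClassicalEpsilon.
Open Scope R_scope.

(* Digit sequences are indexed from 0: beta k is the (k+1)-st digit beta_{k+1}. *)

Definition negaq_value (q : nat) (beta : nat -> nat) (x : R) : Prop :=
  infinite_sum (fun k => INR (beta k) / (- INR q) ^ (S k)) x.

Definition is_digit_seq (q : nat) (beta : nat -> nat) : Prop :=
  forall k, (beta k < q)%nat.

Definition in_Theta (q u : nat) (alpha : nat -> nat) : Prop :=
  forall n, (1 <= alpha n)%nat /\ (alpha n <= q - 1)%nat /\ alpha n <> u.

Fixpoint psum (alpha : nat -> nat) (n : nat) : nat :=
  match n with
  | O => O
  | S m => (psum alpha m + alpha m)%nat
  end.

(* The digit string obtained by concatenating the blocks
   u...u (alpha_n - 1 copies) followed by alpha_n, n = 1,2,...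
   Position k (0-based) is the last position of block n (0-based)
   iff psum alpha (n+1) = k+1; the digit there is alpha n, all other
   digits are u.  Since alpha n >= 1, such an n satisfies n <= k. *)
Definition block_digits (u : nat) (alpha : nat -> nat) (k : nat) : nat :=
  match find (fun n => Nat.eqb (psum alpha (S n)) (S k)) (seq 0 (S k)) with
  | Some n => alpha n
  | None => u
  end.

Definition Dh (q u : nat) (x : R) : Prop :=
  exists alpha, in_Theta q u alpha /\ negaq_value q (block_digits u alpha) x.

Definition Eh (q u : nat) (y : R) : Prop :=
  exists alpha, in_Theta q u alpha /\ negaq_value q alpha y.

(* h(x) = Delta^{-q}_{alpha_1 alpha_2 ...} where x = x((alpha_n)).
   (Chosen via classical epsilon; well-definedness is part of the theorem.)
   Outside D(h) the value is irrelevant. *)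
Definition h (q u : nat) (x : R) : R :=
  epsilon (inhabits 0) (fun y => exists alpha, in_Theta q u alpha /\
            negaq_value q (block_digits u alpha) x /\ negaq_value q alpha y).

(* Main.v *)
Require Import Defs.
From Stdlib Require Import Reals Lra Lia List Classical ClassicalEpsilon FunctionalExtensionality.
Open Scope R_scope.

Fixpoint F (Q : R) (s : nat -> nat) (b M : nat) : R :=
  match M with O => 0 | S M' => - (INR (s b) + F Q s (S b) M') / Q end.

Lemma F_concat Q s : Q <> 0 -> forall a b M,
  F Q s b (a + M) = F Q s b a + F Q s (b + a) M / (- Q) ^ a.
Proof.
  intros HQ a; induction a as [|a IH]; intros b M.
  - simpl. rewrite Nat.add_0_r. field.
  - simpl (S a + M)%nat. simpl F at 1. rewrite IH.
    replace (S b + a)%nat with (b + S a)%nat by lia.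
    change (F Q s b (S a)) with (-(INR (s b) + F Q s (S b) a)/Q). simpl pow.
    assert ((-Q)^a <> 0) by (apply pow_nonzero; lra).
    field. split; auto.
Qed.

Lemma F_ext Q s t : forall M b, (forall k, (b <= k < b + M)%nat -> s k = t k) ->
  F Q s b M = F Q t b M.
Proof.
  induction M as [|M IH]; intros b H; simpl; auto.
  rewrite (H b) by lia. rewrite (IH (S b)); auto.
  intros k Hk; apply H; lia.
Qed.

Lemma sum_F Q s : Q <> 0 -> forall n,
  sum_f_R0 (fun k => INR (s k) / (- Q) ^ (S k)) n = F Q s 0 (S n).
Proof.
  intros HQ n; induction n as [|n IH].
  - simpl. field. auto.
  - change (sum_f_R0 (fun k => INR (s k) / (- Q) ^ (S k)) (S n)) with (sum_f_R0 (fun k => INR (s k) / (- Q) ^ (S k)) n + INR (s (S n)) / (-Q)^(S (S n))). rewrite IH.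
    pose proof (F_concat Q s HQ (S n) 0 1) as E.
    replace (S n + 1)%nat with (S (S n)) in E by lia. rewrite E. simpl F at 3.
    assert ((-Q)^n <> 0) by (apply pow_nonzero; lra).
    simpl pow. field. auto.
Qed.

Definition digits (q : nat) (s : nat -> nat) := forall k, (s k < q)%nat.

Lemma INR_digit q (s : nat -> nat) k : (0 < q)%nat -> (s k < q)%nat -> 0 <= INR (s k) <= INR q - 1.
Proof.
  intros Hq H. split. apply pos_INR.
  assert (INR (s k) + 1 <= INR q). { rewrite <- S_INR. apply le_INR. lia. } lra.
Qed.

Lemma F_bounds q s : (3 < q)%nat -> digits q s -> forall M b,
  - INR q / (INR q + 1) <= F (INR q) s b M <= 1 / (INR q + 1).
Proof.
  intros Hq Hs. assert (HQ : 4 <= INR q) by (replace 4 with (INR 4) by (simpl; lra); apply le_INR; lia).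
  set (Q := INR q) in *.
  induction M as [|M IH]; intros b; simpl F.
  - split; apply Rmult_le_reg_r with (Q+1); try lra; field_simplify; lra.
  - destruct (IH (S b)) as [H1 H2].
    destruct (INR_digit q s b ltac:(lia) (Hs b)) as [D1 D2]. fold Q in D1, D2.
    set (f := F Q s (S b) M) in *. set (d := INR (s b)) in *.
    assert (E1 : (Q+1) * f >= - Q). { apply Rmult_le_compat_l with (r := Q+1) in H1; try lra.
      replace ((Q + 1) * (- Q / (Q + 1))) with (-Q) in H1 by (field; lra). lra. }
    assert (E2 : (Q+1) * f <= 1). { apply Rmult_le_compat_l with (r := Q+1) in H2; try lra.
      replace ((Q + 1) * (1 / (Q + 1))) with 1 in H2 by (field; lra). lra. }
    split; apply Rmult_le_reg_r with (Q * (Q+1)); try nra;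
    field_simplify; try lra; nra.
Qed.

Definition Int (q : nat) (t : nat -> nat) b :=
  (1 <= t b \/ t (S b) <= q-2 \/ 1 <= t (S (S b)) \/ t (S (S (S b))) <= q-2)%nat.
Definition Int' (q : nat) (t : nat -> nat) b :=
  (t b <= q-2 \/ 1 <= t (S b) \/ t (S (S b)) <= q-2 \/ 1 <= t (S (S (S b))))%nat.

Lemma INR_ge1 n : (1 <= n)%nat -> 1 <= INR n.
Proof. intros; replace 1 with (INR 1) by reflexivity; apply le_INR; auto. Qed.
Lemma INR_leq2 q n : (3 < q)%nat -> (n <= q - 2)%nat -> INR n <= INR q - 2.
Proof. intros. assert (INR n + 2 <= INR q); [|lra].
  replace 2 with (INR 2) by reflexivity. rewrite <- plus_INR. apply le_INR. lia. Qed.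

Lemma F_interior q t b : (3 < q)%nat -> digits q t -> Int q t b -> Int' q t b ->
  forall M, - INR q / (INR q + 1) + 1 / INR q ^ 4 <= F (INR q) t b (4 + M)
            <= 1 / (INR q + 1) - 1 / INR q ^ 4.
Proof.
  intros Hq Hs H1 H2 M.
  assert (HQ : 4 <= INR q) by (replace 4 with (INR 4) by (simpl; lra); apply le_INR; lia).
  destruct (F_bounds q t Hq Hs M (S (S (S (S b))))) as [Fl Fu].
  destruct (INR_digit q t b ltac:(lia) (Hs b)) as [a0 b0].
  destruct (INR_digit q t (S b) ltac:(lia) (Hs _)) as [a1 b1].
  destruct (INR_digit q t (S (S b)) ltac:(lia) (Hs _)) as [a2 b2].
  destruct (INR_digit q t (S (S (S b))) ltac:(lia) (Hs _)) as [a3 b3].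
  assert (C1 : 1 <= INR (t b) \/ INR (t (S b)) <= INR q - 2 \/ 1 <= INR (t (S (S b)))
     \/ INR (t (S (S (S b)))) <= INR q - 2).
  { destruct H1 as [H|[H|[H|H]]]; [left|right;left|right;right;left|right;right;right];
    (apply INR_ge1 || apply INR_leq2); auto. }
  assert (C2 : INR (t b) <= INR q - 2 \/ 1 <= INR (t (S b)) \/ INR (t (S (S b))) <= INR q - 2
     \/ 1 <= INR (t (S (S (S b))))).
  { destruct H2 as [H|[H|[H|H]]]; [left|right;left|right;right;left|right;right;right];
    (apply INR_ge1 || apply INR_leq2); auto. }
  clear H1 H2.
  simpl F.
  set (Q := INR q) in *. set (f := F Q t (S (S (S (S b)))) M) in *.
  set (d0 := INR (t b)) in *. set (d1 := INR (t (S b))) in *.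
  set (d2 := INR (t (S (S b)))) in *. set (d3 := INR (t (S (S (S b))))) in *.
  set (U := 1 / (Q+1)) in *.
  assert (HL : - Q / (Q + 1) = - Q * U) by (unfold U; field; lra).
  rewrite HL in *.
  assert (HU : U * (Q+1) = 1) by (unfold U; field; lra).
  assert (Q4 : 0 < Q^4) by (apply pow_lt; lra).
  assert (E : Q^4 * (- (d0 + - (d1 + - (d2 + - (d3 + f) / Q) / Q) / Q) / Q)
             = - d0 * Q^3 + d1 * Q^2 - d2 * Q + d3 + f) by (field; lra).
  assert (EU : Q^4 * (U - 1/Q^4) = (Q-1)*Q^2 + (Q-1) + U - 1) by (unfold U; field; lra).
  assert (EL : Q^4 * (- Q * U + 1/Q^4) = -(Q-1)*Q^3 - (Q-1)*Q - Q*U + 1) by (unfold U; field; lra).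
  assert (Q3 : Q^3 >= 1) by (replace 1 with (1^3) by ring; apply Rle_ge, pow_incr; lra).
  assert (Q2 : Q^2 >= 1) by (replace 1 with (1^2) by ring; apply Rle_ge, pow_incr; lra).
  assert (QU : Q * U = Q * U) by reflexivity.
  split.
  - apply Rmult_le_reg_l with (Q^4); auto. rewrite EL, E.
    assert (f + Q*U >= 0) by lra.
    destruct C2 as [G|[G|[G|G]]]; nra.
  - apply Rmult_le_reg_l with (Q^4); auto. rewrite EU, E.
    destruct C1 as [G|[G|[G|G]]]; nra.
Qed.

Lemma Q_ge4 q : (3 < q)%nat -> 4 <= INR q.
Proof. intros; replace 4 with (INR 4) by (simpl; lra); apply le_INR; lia. Qed.

Lemma lim_ge q s t x y c : (3 < q)%nat -> negaq_value q s x -> negaq_value q t y ->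
  (exists N0, forall n, (n >= N0)%nat -> c <= Rabs (F (INR q) s 0 n - F (INR q) t 0 n)) ->
  c <= Rabs (x - y).
Proof.
  intros Hq Hs Ht [N0 HN]. pose proof (Q_ge4 q Hq).
  destruct (Rle_or_lt c (Rabs (x - y))) as [|Hlt]; auto. exfalso.
  set (e := (c - Rabs (x-y))/2).
  destruct (Hs e ltac:(unfold e; lra)) as [N1 H1].
  destruct (Ht e ltac:(unfold e; lra)) as [N2 H2].
  specialize (H1 (N0+N1+N2)%nat ltac:(lia)). specialize (H2 (N0+N1+N2)%nat ltac:(lia)).
  specialize (HN (S (N0+N1+N2)) ltac:(lia)).
  rewrite sum_F in H1, H2 by lra. unfold Rdist in *. unfold e in *.
  revert H1 H2 HN Hlt. generalize (F (INR q) s 0 (S (N0 + N1 + N2))) (F (INR q) t 0 (S (N0 + N1 + N2))).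
  intros a b. unfold Rabs; repeat destruct Rcase_abs; lra.
Qed.

Lemma lim_le q s t x y c : (3 < q)%nat -> negaq_value q s x -> negaq_value q t y ->
  (exists N0, forall n, (n >= N0)%nat -> Rabs (F (INR q) s 0 n - F (INR q) t 0 n) <= c) ->
  Rabs (x - y) <= c.
Proof.
  intros Hq Hs Ht [N0 HN]. pose proof (Q_ge4 q Hq).
  destruct (Rle_or_lt (Rabs (x - y)) c) as [|Hlt]; auto. exfalso.
  set (e := (Rabs (x-y) - c)/2).
  destruct (Hs e ltac:(unfold e; lra)) as [N1 H1].
  destruct (Ht e ltac:(unfold e; lra)) as [N2 H2].
  specialize (H1 (N0+N1+N2)%nat ltac:(lia)). specialize (H2 (N0+N1+N2)%nat ltac:(lia)).
  specialize (HN (S (N0+N1+N2)) ltac:(lia)).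
  rewrite sum_F in H1, H2 by lra. unfold Rdist in *. unfold e in *.
  revert H1 H2 HN Hlt. generalize (F (INR q) s 0 (S (N0 + N1 + N2))) (F (INR q) t 0 (S (N0 + N1 + N2))).
  intros a b. unfold Rabs; repeat destruct Rcase_abs; lra.
Qed.

Lemma F_S Q s b K : F Q s b (S K) = - (INR (s b) + F Q s (S b) K) / Q.
Proof. reflexivity. Qed.

Lemma Rabs_mpow Q k : 0 < Q -> Rabs ((-Q)^k) = Q^k.
Proof. intros. rewrite <- RPow_abs, Rabs_Ropp, Rabs_right; lra. Qed.

Lemma sep q s t k x y : (3 < q)%nat -> digits q s -> digits q t ->
  Int q t (S k) -> Int' q t (S k) -> (forall j, (j < k)%nat -> s j = t j) -> s k <> t k ->
  negaq_value q s x -> negaq_value q t y ->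
  1 / INR q ^ 4 / INR q ^ (S k) <= Rabs (x - y).
Proof.
  intros Hq Hs Ht I1 I2 Hpre Hk Hx Hy. pose proof (Q_ge4 q Hq) as HQ.
  apply (lim_ge q s t x y); auto. exists (k + 5)%nat. intros n Hn.
  replace n with (k + S (4 + (n - k - 5)))%nat by lia.
  set (M := (n - k - 5)%nat). set (Q := INR q) in *.
  rewrite !F_concat by lra.
  rewrite (F_ext Q s t k 0) by (intros; apply Hpre; lia).
  rewrite !F_S.
  destruct (F_bounds q s Hq Hs (4 + M) (S (0 + k))) as [Fl Fu].
  destruct (F_interior q t (S k) Hq Ht I1 I2 M) as [Gl Gu].
  replace (S (0+k)) with (S k) in * by lia. fold Q in Fl, Fu, Gl, Gu.
  set (fs := F Q s (S k) (4 + M)) in *. set (ft := F Q t (S k) (4 + M)) in *.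
  set (z := INR (s k) - INR (t k) + fs - ft).
  assert (Hz : 1 / Q^4 <= Rabs z).
  { assert (UL : 1 / (Q+1) - - Q / (Q+1) = 1) by (field; lra).
    assert (Dp : 0 < 1 / Q^4) by (apply Rdiv_lt_0_compat; [lra| apply pow_lt; lra]).
    revert UL Fl Fu Gl Gu Dp. generalize (1 / (Q+1)) (- Q / (Q+1)) (1 / Q^4). intros U L d UL Fl Fu Gl Gu Dp.
    destruct (Compare_dec.lt_eq_lt_dec (s k) (t k)) as [[Hl|Hl]|Hl]; [| congruence |].
    - assert (INR (s k) + 1 <= INR (t k)) by (rewrite <- S_INR; apply le_INR; lia).
      rewrite Rabs_left1; unfold z; clear z; clearbody fs ft; lra.
    - assert (INR (t k) + 1 <= INR (s k)) by (rewrite <- S_INR; apply le_INR; lia).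
      rewrite Rabs_right; unfold z; clear z; clearbody fs ft; lra. }
  replace (0 + k)%nat with k by lia.
  set (D := F Q t 0 k + - (INR (s k) + fs) / Q / (- Q) ^ k -
    (F Q t 0 k + - (INR (t k) + ft) / Q / (- Q) ^ k)).
  assert (ED : D * (-Q)^(S k) = z).
  { unfold D, z. simpl pow.
    assert ((-Q)^k <> 0) by (apply pow_nonzero; lra). field. lra. }
  assert (Rabs D * Q^(S k) = Rabs z) by (rewrite <- ED, Rabs_mult, Rabs_mpow; lra).
  assert (0 < Q^(S k)) by (apply pow_lt; lra).
  unfold Rdiv at 1. apply Rmult_le_reg_r with (Q^(S k)); auto.
  rewrite Rmult_assoc, Rinv_l by lra. lra.
Qed.

Lemma pow_ge_n Q : 2 <= Q -> forall N, INR N + 1 <= Q ^ N.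
Proof.
  intros HQ N; induction N as [|N IH].
  - simpl. lra.
  - rewrite S_INR. simpl pow. assert (0 <= INR N) by apply pos_INR. nra.
Qed.

Lemma pow_small Q : 2 <= Q -> forall eps, 0 < eps -> exists N, 1 / Q ^ N < eps.
Proof.
  intros HQ eps He. destruct (archimed_cor1 eps He) as [N [H1 H2]].
  exists N. pose proof (pow_ge_n Q HQ N).
  assert (0 < INR N) by (apply lt_0_INR; lia).
  assert (/ Q ^ N <= / INR N) by (apply Rinv_le_contravar; lra).
  unfold Rdiv; lra.
Qed.

Lemma div_le_mono d A B : 0 < d -> 0 < A -> A <= B -> d / B <= d / A.
Proof. intros. unfold Rdiv. apply Rmult_le_compat_l; [lra|]. apply Rinv_le_contravar; lra. Qed.

Lemma abs_div_pow Q N a c : 0 < Q -> Rabs a <= c -> Rabs (a / (-Q) ^ N) <= c / Q ^ N.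
Proof.
  intros HQ H. assert (0 < Q^N) by (apply pow_lt; lra).
  unfold Rdiv. rewrite Rabs_mult, Rabs_inv, Rabs_mpow by lra.
  apply Rmult_le_compat_r; auto. left; apply Rinv_0_lt_compat; auto.
Qed.

Lemma agree_close q s t N : (3 < q)%nat -> digits q s -> digits q t ->
  (forall j, (j < N)%nat -> s j = t j) -> forall K,
  Rabs (F (INR q) s 0 (N + K) - F (INR q) t 0 (N + K)) <= 1 / INR q ^ N.
Proof.
  intros Hq Hs Ht Hpre K. pose proof (Q_ge4 q Hq).
  rewrite !F_concat by lra. rewrite (F_ext _ s t N 0) by (intros; apply Hpre; lia).
  destruct (F_bounds q s Hq Hs K (0 + N)) as [A1 A2].
  destruct (F_bounds q t Hq Ht K (0 + N)) as [B1 B2].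
  assert (UL : 1 / (INR q+1) - - INR q / (INR q+1) = 1) by (field; lra).
  replace (F (INR q) t 0 N + F (INR q) s (0 + N) K / (- INR q) ^ N -
    (F (INR q) t 0 N + F (INR q) t (0 + N) K / (- INR q) ^ N)) with
    ((F (INR q) s (0 + N) K - F (INR q) t (0 + N) K) / (- INR q) ^ N)
    by (field; apply pow_nonzero; lra).
  apply abs_div_pow; [lra|].
  revert A1 A2 B1 B2 UL. generalize (1 / (INR q + 1)) (- INR q / (INR q + 1)).
  intros U L; intros. unfold Rabs; destruct Rcase_abs; lra.
Qed.

Lemma exists_value q s : (3 < q)%nat -> digits q s -> exists x, negaq_value q s x.
Proof.
  intros Hq Hs. pose proof (Q_ge4 q Hq).
  destruct (R_complete (fun n => sum_f_R0 (fun k => INR (s k) / (- INR q) ^ (S k)) n)) as [l Hl].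
  2: { exists l. exact Hl. }
  intros eps He. destruct (pow_small (INR q) ltac:(lra) (eps/2) ltac:(lra)) as [N HN].
  exists N. intros n m Hn Hm. rewrite !sum_F by lra. unfold Rdist.
  assert (E1 : Rabs (F (INR q) s 0 (S n) - F (INR q) s 0 N) <= 1 / INR q ^ N).
  { replace (S n) with (N + (S n - N))%nat by lia.
    rewrite F_concat by lra.
    replace (F (INR q) s 0 N + F (INR q) s (0 + N) (S n - N) / (- INR q) ^ N - F (INR q) s 0 N)
     with (F (INR q) s (0 + N) (S n - N) / (- INR q) ^ N) by ring.
    apply abs_div_pow; [lra|].
    destruct (F_bounds q s Hq Hs (S n - N) (0 + N)) as [A1 A2].
    assert (0 < INR q + 1) by lra.
    assert (- INR q / (INR q + 1) >= -1).
    { apply Rle_ge. apply Rmult_le_reg_r with (INR q + 1); auto. field_simplify; lra. }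
    assert (1 / (INR q + 1) <= 1).
    { apply Rmult_le_reg_r with (INR q + 1); auto. field_simplify; lra. }
    unfold Rabs; destruct Rcase_abs; lra. }
  assert (E2 : Rabs (F (INR q) s 0 (S m) - F (INR q) s 0 N) <= 1 / INR q ^ N).
  { replace (S m) with (N + (S m - N))%nat by lia.
    rewrite F_concat by lra.
    replace (F (INR q) s 0 N + F (INR q) s (0 + N) (S m - N) / (- INR q) ^ N - F (INR q) s 0 N)
     with (F (INR q) s (0 + N) (S m - N) / (- INR q) ^ N) by ring.
    apply abs_div_pow; [lra|].
    destruct (F_bounds q s Hq Hs (S m - N) (0 + N)) as [A1 A2].
    assert (0 < INR q + 1) by lra.
    assert (- INR q / (INR q + 1) >= -1).
    { apply Rle_ge. apply Rmult_le_reg_r with (INR q + 1); auto. field_simplify; lra. }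
    assert (1 / (INR q + 1) <= 1).
    { apply Rmult_le_reg_r with (INR q + 1); auto. field_simplify; lra. }
    unfold Rabs; destruct Rcase_abs; lra. }
  revert E1 E2 HN. generalize (F (INR q) s 0 (S n)) (F (INR q) s 0 (S m)) (F (INR q) s 0 N) (1 / INR q ^ N).
  intros a b c d. unfold Rabs; repeat destruct Rcase_abs; lra.
Qed.

Definition intr q t := forall b, Int q t b /\ Int' q t b.

Lemma agree q s t m x y : (3 < q)%nat -> digits q s -> digits q t -> intr q t ->
  negaq_value q s x -> negaq_value q t y ->
  Rabs (x - y) < 1 / INR q ^ 4 / INR q ^ (S m) ->
  forall k, (k <= m)%nat -> s k = t k.
Proof.
  intros Hq Hs Ht Hi Hx Hy Hd k. pose proof (Q_ge4 q Hq).
  induction k as [k IH] using Wf_nat.lt_wf_ind. intros Hk.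
  destruct (Nat.eq_dec (s k) (t k)) as [|Hne]; auto. exfalso.
  destruct (Hi (S k)) as [I1 I2].
  pose proof (sep q s t k x y Hq Hs Ht I1 I2 ltac:(intros j Hj; apply IH; lia) Hne Hx Hy).
  assert (1 / INR q ^ 4 / INR q ^ S m <= 1 / INR q ^ 4 / INR q ^ S k).
  { apply div_le_mono. apply Rdiv_lt_0_compat; [lra|apply pow_lt; lra].
    apply pow_lt; lra. apply Rle_pow; [lra|lia]. }
  lra.
Qed.


Lemma psum_lt q u alpha : in_Theta q u alpha -> forall m n, (m < n)%nat -> (psum alpha m < psum alpha n)%nat.
Proof.
  intros hT m n H. induction n as [|n IH]; [lia|].
  simpl. destruct (hT n) as [A _]. destruct (Nat.eq_dec m n); [subst; lia|].
  specialize (IH ltac:(lia)). lia.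
Qed.

Lemma psum_le q u alpha : in_Theta q u alpha -> forall m n, (m <= n)%nat -> (psum alpha m <= psum alpha n)%nat.
Proof.
  intros hT m n H. destruct (Nat.eq_dec m n); [subst; lia|].
  pose proof (psum_lt q u alpha hT m n ltac:(lia)); lia.
Qed.

Lemma psum_ub q u alpha : in_Theta q u alpha -> forall n, (psum alpha n <= (q-1)*n)%nat.
Proof.
  intros hT n; induction n as [|n IH]; simpl; [lia|]. destruct (hT n) as [_ [B _]]. nia.
Qed.

Lemma psum_ge q u alpha : in_Theta q u alpha -> forall n, (n <= psum alpha n)%nat.
Proof.
  intros hT n; induction n as [|n IH]; simpl; [lia|]. destruct (hT n) as [A _]. lia.
Qed.

Lemma bd_end q u alpha n k : in_Theta q u alpha -> psum alpha (S n) = S k ->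
  block_digits u alpha k = alpha n.
Proof.
  intros hT H. unfold block_digits.
  destruct (find (fun n0 => Nat.eqb (psum alpha (S n0)) (S k)) (seq 0 (S k))) as [n'|] eqn:E.
  - apply find_some in E as [_ E]. apply Nat.eqb_eq in E.
    destruct (Nat.lt_total n' n) as [Hl|[Hl|Hl]]; [| subst; auto |];
      [pose proof (psum_lt q u alpha hT (S n') (S n) ltac:(lia)) |
       pose proof (psum_lt q u alpha hT (S n) (S n') ltac:(lia))]; lia.
  - exfalso. pose proof (find_none _ _ E n) as F. rewrite in_seq in F.
    pose proof (psum_ge q u alpha hT (S n)).
    specialize (F ltac:(lia)). apply Nat.eqb_neq in F. lia.
Qed.

Lemma bd_notend q u alpha k : in_Theta q u alpha -> (forall n, psum alpha (S n) <> S k) ->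
  block_digits u alpha k = u.
Proof.
  intros hT H. unfold block_digits.
  destruct (find (fun n0 => Nat.eqb (psum alpha (S n0)) (S k)) (seq 0 (S k))) as [n'|] eqn:E; auto.
  apply find_some in E as [_ E]. apply Nat.eqb_eq in E. exfalso; eapply H; eauto.
Qed.

Lemma bd_in q u alpha n k : in_Theta q u alpha -> (psum alpha n <= k)%nat ->
  (S k < psum alpha (S n))%nat -> block_digits u alpha k = u.
Proof.
  intros hT H1 H2. apply (bd_notend q); auto. intros n' E.
  destruct (Nat.lt_total n' n) as [Hl|[Hl|Hl]].
  - pose proof (psum_le q u alpha hT (S n') n ltac:(lia)); lia.
  - subst; lia.
  - pose proof (psum_le q u alpha hT (S n) (S n') ltac:(lia)); lia.
Qed.

Lemma bd_cases q u alpha k : in_Theta q u alpha ->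
  block_digits u alpha k = u \/ exists n, psum alpha (S n) = S k /\ block_digits u alpha k = alpha n.
Proof.
  intros hT. destruct (Classical_Prop.classic (exists n, psum alpha (S n) = S k)) as [[n H]|H].
  - right. exists n. split; auto. apply (bd_end q); auto.
  - left. apply (bd_notend q); auto. intros n E; apply H; eauto.
Qed.

Lemma bd_digits q u alpha : (3 < q)%nat -> (u < q)%nat -> in_Theta q u alpha ->
  digits q (block_digits u alpha).
Proof.
  intros Hq Hu hT k. destruct (bd_cases q u alpha k hT) as [E|[n [_ E]]]; rewrite E; auto.
  destruct (hT n) as [_ [B _]]. lia.
Qed.

Lemma bd_zero q u alpha k : in_Theta q u alpha -> block_digits u alpha k = 0%nat -> u = 0%nat.
Proof.
  intros hT H. destruct (bd_cases q u alpha k hT) as [E|[n [_ E]]]; [congruence|].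
  destruct (hT n) as [A _]. lia.
Qed.

Lemma bd_top q u alpha k j : (3 < q)%nat -> in_Theta q u alpha -> u = 0%nat ->
  block_digits u alpha k = (q - 1)%nat -> (j < k)%nat -> (k <= j + (q - 2))%nat ->
  block_digits u alpha j = 0%nat.
Proof.
  intros Hq hT Hu Hk H1 H2.
  destruct (bd_cases q u alpha k hT) as [E|[n [En E]]]; [lia|].
  rewrite E in Hk. simpl in En.
  rewrite <- Hu. apply (bd_in q u alpha n j hT); simpl; lia.
Qed.

Lemma bd_interior q u alpha : (3 < q)%nat -> (u < q)%nat -> in_Theta q u alpha ->
  intr q (block_digits u alpha).
Proof.
  intros Hq Hu hT b. pose proof (bd_digits q u alpha Hq Hu hT) as D.
  split; unfold Int, Int'.
  - destruct (Nat.eq_dec (block_digits u alpha b) 0) as [E0|]; [|lia].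
    pose proof (bd_zero q u alpha b hT E0) as Hu0.
    destruct (Nat.le_gt_cases (block_digits u alpha (S (S (S b)))) (q-2)); [tauto|].
    assert (T : block_digits u alpha (S (S (S b))) = (q-1)%nat) by (specialize (D (S (S (S b)))); lia).
    pose proof (bd_top q u alpha _ (S b) Hq hT Hu0 T ltac:(lia) ltac:(lia)). lia.
  - destruct (Nat.eq_dec (block_digits u alpha (S b)) 0) as [E0|]; [|lia].
    pose proof (bd_zero q u alpha _ hT E0) as Hu0.
    destruct (Nat.le_gt_cases (block_digits u alpha (S (S b))) (q-2)); [tauto|].
    assert (T : block_digits u alpha (S (S b)) = (q-1)%nat) by (specialize (D (S (S b))); lia).
    pose proof (bd_top q u alpha _ b Hq hT Hu0 T ltac:(lia) ltac:(lia)). lia.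
Qed.

Lemma theta_digits q u alpha : (3 < q)%nat -> in_Theta q u alpha -> digits q alpha.
Proof. intros Hq hT k. destruct (hT k) as [_ [B _]]; lia. Qed.

Lemma theta_interior q u alpha : in_Theta q u alpha -> intr q alpha.
Proof. intros hT b. unfold Int, Int'. destruct (hT b) as [A _]. destruct (hT (S b)) as [A' _]. tauto. Qed.

Lemma recover_step q u alpha beta m n : in_Theta q u alpha -> in_Theta q u beta ->
  (forall k, (k < m)%nat -> block_digits u alpha k = block_digits u beta k) ->
  psum alpha n = psum beta n -> (psum alpha (S n) <= m)%nat -> alpha n = beta n.
Proof.
  intros hA hB Hk P Hn. simpl in Hn.
  destruct (hA n) as [A1 [A2 A3]]. destruct (hB n) as [B1 [B2 B3]].
  destruct (Nat.lt_total (alpha n) (beta n)) as [Hl|[Hl|Hl]]; auto; exfalso.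
  - set (k := (psum alpha n + alpha n - 1)%nat).
    assert (E1 : block_digits u alpha k = alpha n) by (apply (bd_end q); auto; simpl; unfold k; lia).
    assert (E2 : block_digits u beta k = u) by (apply (bd_in q u beta n k); auto; simpl; unfold k; lia).
    rewrite Hk in E1 by (unfold k; lia). congruence.
  - set (k := (psum beta n + beta n - 1)%nat).
    assert (E1 : block_digits u beta k = beta n) by (apply (bd_end q); auto; simpl; unfold k; lia).
    assert (E2 : block_digits u alpha k = u) by (apply (bd_in q u alpha n k); auto; simpl; unfold k; lia).
    rewrite Hk in E2 by (unfold k; lia). congruence.
Qed.

Lemma recover q u alpha beta m : in_Theta q u alpha -> in_Theta q u beta ->
  (forall k, (k < m)%nat -> block_digits u alpha k = block_digits u beta k) ->
  forall n, (psum alpha (S n) <= m)%nat -> alpha n = beta n /\ psum alpha (S n) = psum beta (S n).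
Proof.
  intros hA hB Hk n. induction n as [|n IH]; intros Hn.
  - assert (E : alpha 0%nat = beta 0%nat) by (apply (recover_step q u alpha beta m 0); auto).
    split; auto.
  - assert (Hn' : (psum alpha (S n) <= m)%nat).
    { pose proof (psum_le q u alpha hA (S n) (S (S n)) ltac:(lia)). lia. }
    destruct (IH Hn') as [_ P].
    assert (E : alpha (S n) = beta (S n)) by (apply (recover_step q u alpha beta m (S n)); auto).
    split; auto. simpl in *. lia.
Qed.

Lemma same_digits q s t x : (3 < q)%nat -> digits q s -> digits q t -> intr q t ->
  negaq_value q s x -> negaq_value q t x -> forall k, s k = t k.
Proof.
  intros Hq Hs Ht Hi H1 H2 k. pose proof (Q_ge4 q Hq).
  apply (agree q s t k x x Hq Hs Ht Hi H1 H2); [|lia].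
  replace (x - x) with 0 by ring. rewrite Rabs_R0.
  apply Rdiv_lt_0_compat; [apply Rdiv_lt_0_compat; [lra|]|]; apply pow_lt; lra.
Qed.

Lemma nv_uniq q s x y : negaq_value q s x -> negaq_value q s y -> x = y.
Proof. intros. eapply UL_sequence; eauto. Qed.

Theorem theorem3p1 (q u : nat) (hq : (3 < q)%nat) (hu : (u < q)%nat) :
  (forall alpha beta x,
      in_Theta q u alpha -> in_Theta q u beta ->
      negaq_value q (block_digits u alpha) x ->
      negaq_value q (block_digits u beta) x ->
      forall n, alpha n = beta n) /\
  (forall x, Dh q u x ->
      forall g1 g2, is_digit_seq q g1 -> is_digit_seq q g2 ->
      negaq_value q g1 x -> negaq_value q g2 x ->
      forall k, g1 k = g2 k) /\
  (forall alpha x, in_Theta q u alpha ->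
      negaq_value q (block_digits u alpha) x -> negaq_value q alpha (h q u x)) /\
  (forall x, Dh q u x -> Eh q u (h q u x)) /\
  (forall x1 x2, Dh q u x1 -> Dh q u x2 -> h q u x1 = h q u x2 -> x1 = x2) /\
  (forall y, Eh q u y -> exists x, Dh q u x /\ h q u x = y) /\
  (forall x0, Dh q u x0 -> limit1_in (h q u) (Dh q u) (h q u x0) x0).
Proof.
  pose proof (Q_ge4 q hq) as HQ.
  assert (C1 : forall alpha beta x,
      in_Theta q u alpha -> in_Theta q u beta ->
      negaq_value q (block_digits u alpha) x ->
      negaq_value q (block_digits u beta) x ->
      forall n, alpha n = beta n).
  { intros alpha beta x hA hB H1 H2 n.
    assert (E := same_digits q _ _ x hq (bd_digits q u alpha hq hu hA) (bd_digits q u beta hq hu hB)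
                 (bd_interior q u beta hq hu hB) H1 H2).
    apply (recover q u alpha beta (psum alpha (S n)) hA hB (fun k _ => E k) n); lia. }
  assert (C3 : forall alpha x, in_Theta q u alpha ->
      negaq_value q (block_digits u alpha) x -> negaq_value q alpha (h q u x)).
  { intros alpha x hA Hx. unfold h.
    destruct (exists_value q alpha hq (theta_digits q u alpha hq hA)) as [y Hy].
    match goal with |- negaq_value q alpha (epsilon ?i ?P) =>
      destruct (epsilon_spec i P) as [alpha' [hA' [Hx' Hy']]] end.
    { exists y, alpha; auto. }
    assert (E : alpha' = alpha) by (apply functional_extensionality; intro n; eapply C1; eauto).
    subst; auto. }
  split; [exact C1|]. split.
  { intros x [alpha [hA Hx]] g1 g2 H1 H2 Hg1 Hg2 k.
    rewrite (same_digits q g1 (block_digits u alpha) x hq H1 (bd_digits q u alpha hq hu hA)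
      (bd_interior q u alpha hq hu hA) Hg1 Hx k).
    symmetry. apply (same_digits q g2 (block_digits u alpha) x hq H2 (bd_digits q u alpha hq hu hA)
      (bd_interior q u alpha hq hu hA) Hg2 Hx k). }
  split; [exact C3|]. split.
  { intros x [alpha [hA Hx]]. exists alpha; split; auto. }
  split.
  { intros x1 x2 [a1 [h1 H1]] [a2 [h2 H2]] E.
    pose proof (C3 _ _ h1 H1) as G1. pose proof (C3 _ _ h2 H2) as G2. rewrite E in G1.
    assert (a1 = a2).
    { apply functional_extensionality. intro n.
      apply (same_digits q a1 a2 (h q u x2) hq (theta_digits q u a1 hq h1) (theta_digits q u a2 hq h2)
        (theta_interior q u a2 h2) G1 G2). }
    subst. eapply nv_uniq; eauto. }
  split.
  { intros y [alpha [hA Hy]].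
    destruct (exists_value q (block_digits u alpha) hq (bd_digits q u alpha hq hu hA)) as [x Hx].
    exists x. split; [exists alpha; auto|]. eapply nv_uniq; [apply (C3 alpha x hA Hx)|auto]. }
  intros x0 [alpha0 [hA0 Hx0]] eps He.
  destruct (pow_small (INR q) ltac:(lra) eps He) as [N HN].
  set (m := ((q - 1) * N)%nat).
  exists (1 / INR q ^ 4 / INR q ^ (S m)). split.
  { apply Rdiv_lt_0_compat; [apply Rdiv_lt_0_compat; [lra|]|]; apply pow_lt; lra. }
  intros x [[alpha [hA Hx]] Hd]. simpl in Hd |- *. unfold Rdist in *.
  assert (Ag := agree q _ _ m x x0 hq (bd_digits q u alpha hq hu hA) (bd_digits q u alpha0 hq hu hA0)
     (bd_interior q u alpha0 hq hu hA0) Hx Hx0 Hd).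
  assert (Hpre : forall n, (n < N)%nat -> alpha n = alpha0 n).
  { intros n Hn. apply (recover q u alpha alpha0 m hA hA0); [intros; apply Ag; lia|].
    pose proof (psum_ub q u alpha hA (S n)). unfold m. nia. }
  pose proof (C3 _ _ hA Hx) as G. pose proof (C3 _ _ hA0 Hx0) as G0.
  assert (Rabs (h q u x - h q u x0) <= 1 / INR q ^ N).
  { apply (lim_le q alpha alpha0); auto. exists N. intros n Hn.
    replace n with (N + (n - N))%nat by lia.
    apply agree_close; auto; apply (theta_digits q u); auto. }
  lra.
Qed.
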